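(* Let $\gamma > 1.562$. Let $I$ be a $\gamma$-stable instance of the Euclidean Steiner tree problem. Then the (unique) optimal Steiner tree $\mathrm{OPT}$ of $I$ contains no Steiner points, i.e. every vertex of $\mathrm{OPT}$ is a terminal.
   Context: An instance of the Euclidean Steiner tree problem consists of a finite set $V \subset \mathbb{R}^d$ of points, a set $T \subseteq V$ of terminals, and the complete graph on $V$ with edge weights $w_{uv} = \|u - v\|$ (Euclidean distance). Points of $V \setminus T$ are called Steiner points. A Steiner tree is a tree in this complete graph whose vertex set contains all of $T$ (it may contain some Steiner points); its weight is the sum of the weights of its edges. For $\gamma > 1$, the instance is $\gamma$-stable if it has a minimum-weight Steiner tree $\mathrm{OPT}$ such that for every function $w' : V \times V \to \mathbb{R}_{\ge 0}$ with $w_{uv} \le w'_{uv} \le \gamma w_{uv}$ for all $u,v \in V$, every minimum-weight Steiner tree with respect to the weights $w'$ is equal to $\mathrm{OPT}$ (the perturbed weights $w'$ need not be Euclidean or even metric). *)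

(* Defs.v *)
From HB Require Import structures.
From mathcomp Require Import all_boot all_order all_algebra.
From mathcomp Require Import reals.
Set Implicit Arguments. Unset Strict Implicit. Unset Printing Implicit Defensive.
Import Order.TTheory GRing.Theory Num.Theory.
Local Open Scope ring_scope.

Section Steiner.
Variables (R : realType) (d : nat) (V : finType).

Definition eucl_dist (x y : 'rV[R]_d) : R :=
  Num.sqrt (\sum_(i < d) (x ord0 i - y ord0 i) ^+ 2).

(* An edge of the complete graph on V is a 2-element subset {u,v} of V.
   Its Euclidean weight ||u - v|| (for a 2-set, the max over its pairs
   is exactly the distance between its two elements). *)
Definition eucl_weight (p : V -> 'rV[R]_d) (e : {set V}) : R :=
  \big[Num.max/0]_(u in e) \big[Num.max/0]_(v in e) eucl_dist (p u) (p v).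

Definition adj (E : {set {set V}}) : rel V := fun x y => [set x; y] \in E.

Definition is_tree (Vt : {set V}) (E : {set {set V}}) : Prop :=
  [/\ Vt != set0,
      (forall e, e \in E -> #|e| = 2%N /\ e \subset Vt),
      (forall u v, u \in Vt -> v \in Vt -> connect (adj E) u v)
    & #|E| = (#|Vt| - 1)%N].

Definition is_steiner_tree (T : {set V}) (Vt : {set V}) (E : {set {set V}}) :=
  is_tree Vt E /\ T \subset Vt.

Definition tree_weight (w : {set V} -> R) (E : {set {set V}}) : R :=
  \sum_(e in E) w e.

Definition is_min_steiner_tree (w : {set V} -> R) (T : {set V})
    (Vt : {set V}) (E : {set {set V}}) : Prop :=
  is_steiner_tree T Vt E /\
  forall Vt' E', is_steiner_tree T Vt' E' -> tree_weight w E <= tree_weight w E'.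

Definition gamma_stable (p : V -> 'rV[R]_d) (T : {set V}) (gamma : R) : Prop :=
  exists VO EO, is_min_steiner_tree (eucl_weight p) T VO EO /\
    forall w' : {set V} -> R,
      (forall e : {set V}, 0 <= w' e) ->
      (forall e : {set V}, #|e| = 2%N -> eucl_weight p e <= w' e <= gamma * eucl_weight p e) ->
      forall Vt E, is_min_steiner_tree w' T Vt E -> Vt = VO /\ E = EO.

End Steiner.

(* Main.v *)
Require Import Defs.
From HB Require Import structures.
From mathcomp Require Import all_boot all_order all_algebra.
From mathcomp Require Import reals.
From mathcomp Require Import ring lra zify.
From Stdlib Require Import Classical.
Import Order.TTheory GRing.Theory Num.Theory.
Local Open Scope ring_scope.
Set Implicit Arguments. Unset Strict Implicit. Unset Printing Implicit Defensive.

Lemma arith_k4 (R : realType) (g S rm k : R) : 1562/1000 < g -> 0 < S -> 0 <= rm ->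
  k * rm <= S -> k <= 4 -> g * S < (k - 1) * rm + (S - rm) -> False.
Proof.
move=> hg hS hr h1 h2 h3.
have : 0 <= (4 - k) * rm by apply: mulr_ge0 => //; lra.
have : 0 < (g - 1562 / 1000) * S by apply: mulr_gt0 => //; lra.
nra.
Qed.

Lemma arith_A (R : realType) (g S rm : R) : 
  3 * rm <= (g - 1) * S -> g * S < (5 - 1) * rm + (S - rm) -> False.
Proof. move=> h1 h2; nra. Qed.

Lemma arith_B (R : realType) (g S rm T c0 Q D : R) : 1562/1000 < g -> 0 < S -> 0 <= rm ->
  (g - 1) * S < 3 * rm -> 5 * (g * S) <= T -> c0 = g * S / 4 ->
  2 * c0 * T <= D + 20 * c0 ^+ 2 -> D <= 2 * 5 * Q -> Q <= (S - 4 * rm) * S -> False.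
Proof.
move=> hg hS hr h1 h2 hc h3 h4 h5.
have c00 : 0 <= c0 by rewrite hc; apply: divr_ge0 => //; apply: mulr_ge0; lra.
have J1 : 2 * c0 * (5 * (g * S)) <= 2 * c0 * T by apply: ler_wpM2l => //; lra.
have J2 : 5 / 4 * (g * S) ^+ 2 <= 10 * Q.
  rewrite hc in J1 h3; nra.
have J3 : 5 / 4 * g ^+ 2 * S <= 10 * (S - 4 * rm).
  rewrite -(ler_pM2r hS); nra.
have J4 : 5 / 4 * g ^+ 2 * S < 10 * S - 40 / 3 * (g - 1) * S by nra.
have J5 : 5 / 4 * g ^+ 2 < 10 - 40 / 3 * (g - 1).
  rewrite -(ltr_pM2r hS); nra.
nra.
Qed.

Section Geo.
Variables (R : realType) (d : nat).

Lemma CS (a b : 'I_d -> R) :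
  (\sum_i a i * b i) ^+ 2 <= (\sum_i a i ^+ 2) * (\sum_i b i ^+ 2).
Proof.
set A := \sum_i a i ^+ 2; set B := \sum_i b i ^+ 2; set C := \sum_i a i * b i.
have B0 : 0 <= B by apply: sumr_ge0 => i _; exact: sqr_ge0.
have [Bz|Bp] := eqVneq B 0.
  have hb : forall i, b i = 0.
    move=> i; apply/eqP; rewrite -sqrf_eq0; apply/eqP.
    by move/eqP: Bz; rewrite psumr_eq0 => [/allP/(_ i (mem_index_enum _))/implyP/(_ isT)/eqP|j _]; [|exact: sqr_ge0].
  have -> : C = 0 by rewrite /C big1 // => i _; rewrite hb mulr0.
  by rewrite expr0n /= Bz mulr0.
have Bpos : 0 < B by rewrite lt_def Bp B0.
have H : 0 <= \sum_i (a i * B - b i * C) ^+ 2 by apply: sumr_ge0 => i _; exact: sqr_ge0.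
have E : \sum_i (a i * B - b i * C) ^+ 2 = B * (A * B - C ^+ 2).
  have -> : \sum_i (a i * B - b i * C) ^+ 2 =
     \sum_i (B ^+ 2 * a i ^+ 2 - (2 * B * C) * (a i * b i) + C ^+ 2 * b i ^+ 2).
    by apply: eq_bigr => i _; ring.
  rewrite big_split /= big_split /= sumrN -!mulr_sumr -/A -/B -/C; ring.
rewrite E in H.
have : 0 <= A * B - C ^+ 2 by rewrite -(pmulr_rge0 _ Bpos).
lra.
Qed.

Lemma dist_ge0 (x y : 'rV[R]_d) : 0 <= eucl_dist x y.
Proof. exact: sqrtr_ge0. Qed.

Lemma dist_sq (x y : 'rV[R]_d) :
  eucl_dist x y ^+ 2 = \sum_i (x ord0 i - y ord0 i) ^+ 2.
Proof. rewrite /eucl_dist sqr_sqrtr //; apply: sumr_ge0 => i _; exact: sqr_ge0. Qed.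

Lemma dist_sym (x y : 'rV[R]_d) : eucl_dist x y = eucl_dist y x.
Proof. rewrite /eucl_dist; congr Num.sqrt; apply: eq_bigr => i _; ring. Qed.

Lemma dist_xx (x : 'rV[R]_d) : eucl_dist x x = 0.
Proof. rewrite /eucl_dist big1 ?sqrtr0 // => i _; by rewrite subrr expr0n. Qed.

Lemma dist_tri (x y z : 'rV[R]_d) :
  eucl_dist x z <= eucl_dist x y + eucl_dist y z.
Proof.
set u := eucl_dist x y; set v := eucl_dist y z.
have u0 : 0 <= u by exact: dist_ge0.
have v0 : 0 <= v by exact: dist_ge0.
rewrite -(ler_pXn2r (n := 2)) // ?nnegrE ?dist_ge0 ?addr_ge0 //.
rewrite dist_sq.
set a := fun i => x ord0 i - y ord0 i. set b := fun i => y ord0 i - z ord0 i.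
have -> : \sum_i (x ord0 i - z ord0 i) ^+ 2 = \sum_i a i ^+ 2 + \sum_i b i ^+ 2 + 2 * \sum_i a i * b i.
  rewrite mulr_sumr -!big_split /=; apply: eq_bigr => i _; rewrite /a /b; ring.
have hu : \sum_i a i ^+ 2 = u ^+ 2 by rewrite dist_sq.
have hv : \sum_i b i ^+ 2 = v ^+ 2 by rewrite dist_sq.
rewrite hu hv.
have := CS a b; rewrite hu hv -exprMn => hcs.
have : \sum_i a i * b i <= u * v.
  have : `|\sum_i a i * b i| <= u * v.
    by rewrite -(ler_pXn2r (n := 2)) ?nnegrE ?normr_ge0 ?mulr_ge0 // real_normK ?num_real.
  by apply: le_trans; exact: ler_norm.
move=> h; nra.
Qed.

Lemma pair_sum (V : finType) (N : {set V}) (y : V -> R) :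
  \sum_(a in N) \sum_(b in N) (y a - y b) ^+ 2 =
  2 * #|N|%:R * \sum_(a in N) y a ^+ 2 - 2 * (\sum_(a in N) y a) ^+ 2.
Proof.
have E : forall a, \sum_(b in N) (y a - y b) ^+ 2 =
   #|N|%:R * y a ^+ 2 + \sum_(b in N) y b ^+ 2 - 2 * y a * \sum_(b in N) y b.
  move=> a.
  rewrite (eq_bigr (fun b => y a ^+ 2 + y b ^+ 2 - 2 * y a * y b)); last by move=> b _; ring.
  by rewrite big_split big_split /= sumrN sumr_const -mulr_sumr [#|N|%:R * _]mulr_natl.
under eq_bigr => a _ do rewrite E.
rewrite big_split big_split /= sumrN -mulr_sumr -mulr_suml sumr_const -mulr_natl.
rewrite -mulr_sumr -mulr_natl; ring.
Qed.

Lemma G1 (V : finType) (N : {set V}) (x : V -> 'rV[R]_d) (c : 'rV[R]_d) :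
  \sum_(a in N) \sum_(b in N) eucl_dist (x a) (x b) ^+ 2 <=
  2 * #|N|%:R * \sum_(a in N) eucl_dist c (x a) ^+ 2.
Proof.
have -> : \sum_(a in N) \sum_(b in N) eucl_dist (x a) (x b) ^+ 2 =
    \sum_i \sum_(a in N) \sum_(b in N) (x a ord0 i - x b ord0 i) ^+ 2.
  transitivity (\sum_(a in N) \sum_(b in N) \sum_i (x a ord0 i - x b ord0 i) ^+ 2).
    by apply: eq_bigr => a _; apply: eq_bigr => b _; exact: dist_sq.
  under eq_bigr => a _ do rewrite exchange_big.
  by rewrite exchange_big.
have -> : 2 * #|N|%:R * \sum_(a in N) eucl_dist c (x a) ^+ 2 =
    \sum_i 2 * #|N|%:R * \sum_(a in N) (c ord0 i - x a ord0 i) ^+ 2.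
  rewrite -mulr_sumr exchange_big /=; congr (_ * _).
  by apply: eq_bigr => a _; exact: dist_sq.
apply: ler_sum => i _.
set y := fun a => x a ord0 i - c ord0 i.
have -> : \sum_(a in N) \sum_(b in N) (x a ord0 i - x b ord0 i) ^+ 2 =
          \sum_(a in N) \sum_(b in N) (y a - y b) ^+ 2.
  by apply: eq_bigr => a _; apply: eq_bigr => b _; rewrite /y; congr (_ ^+ 2); ring.
rewrite pair_sum.
have -> : \sum_(a in N) (c ord0 i - x a ord0 i) ^+ 2 = \sum_(a in N) y a ^+ 2.
  by apply: eq_bigr => a _; rewrite /y; ring.
have := sqr_ge0 (\sum_(a in N) y a); lra.
Qed.

Lemma exists_min (V : finType) (N : {set V}) (f : V -> R) :
  N != set0 -> exists2 m, m \in N & forall a, a \in N -> f m <= f a.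
Proof.
case/set0Pn => a0 Ha0.
case: (arg_minP f Ha0) => m Hm Hmin.
by exists m.
Qed.


Lemma sum_constR (V : finType) (A : {set V}) (c : R) :
  \sum_(i in A) c = #|A|%:R * c.
Proof. by rewrite sumr_const mulr_natl. Qed.

Lemma geo_contra (V : finType) (N : {set V}) (x : V -> 'rV[R]_d) (c : 'rV[R]_d) (g : R) :
  1562%:R / 1000%:R < g -> N != set0 ->
  (forall a, a \in N -> 0 < eucl_dist c (x a)) ->
  (forall a b, a \in N -> b \in N -> a != b ->
       g * eucl_dist c (x b) < eucl_dist (x a) (x b)) ->
  (forall m, m \in N -> g * \sum_(a in N) eucl_dist c (x a) <
                       \sum_(a in N :\ m) eucl_dist (x m) (x a)) ->
  False.
Proof.
move=> hg hN hr hF1 hF2.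
have hg' : 1562 / 1000 < g by [].
have g1 : 1 < g by lra.
set r := fun a => eucl_dist c (x a).
set dd := fun a b => eucl_dist (x a) (x b).
set k := #|N|.
set S := \sum_(a in N) r a.
set Q := \sum_(a in N) r a ^+ 2.
have [a0 Ha0] := set0Pn _ hN.
have kpos : (0 < k)%N by rewrite /k card_gt0.
have r0 : forall a, 0 <= r a by move=> a; exact: dist_ge0.
have Qpos : 0 < Q.
  rewrite /Q (big_setD1 a0) //=.
  have : 0 <= \sum_(i in N :\ a0) r i ^+ 2 by apply: sumr_ge0 => i _; exact: sqr_ge0.
  have : 0 < r a0 ^+ 2 by rewrite exprn_gt0 // hr.
  lra.
have Spos : 0 < S.
  rewrite /S (big_setD1 a0) //=.
  have : 0 <= \sum_(i in N :\ a0) r i by apply: sumr_ge0 => i _; exact: r0.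
  have := hr a0 Ha0; rewrite -/(r a0). lra.
have cardD : forall a, a \in N -> #|N :\ a|%:R = k%:R - 1 :> R.
  by move=> a Ha; rewrite /k (cardsD1 a N) Ha natrD addrC addKr.
have H1 : forall a, a \in N -> \sum_(b in N) dd a b ^+ 2 = \sum_(b in N :\ a) dd a b ^+ 2.
  by move=> a Ha; rewrite (big_setD1 a) //= /dd dist_xx expr0n add0r.
have H2 : forall a, a \in N ->
    g ^+ 2 * ((k%:R - 1) * r a ^+ 2 + (Q - r a ^+ 2)) <= 2 * \sum_(b in N :\ a) dd a b ^+ 2.
  move=> a Ha.
  have -> : Q - r a ^+ 2 = \sum_(b in N :\ a) r b ^+ 2 by rewrite /Q (big_setD1 a) //= addrC addrK.
  have E : #|N :\ a|%:R * r a ^+ 2 = \sum_(b in N :\ a) r a ^+ 2 by rewrite sumr_const mulr_natl.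
  rewrite -(cardD a Ha) E -big_split /= !mulr_sumr.
  apply: ler_sum => b; rewrite in_setD1 => /andP[hba hb].
  have h1 : g * r b < dd a b by apply: hF1 => //; rewrite eq_sym.
  have h2 : g * r a < dd a b by rewrite /dd dist_sym; apply: hF1.
  have ra0 := r0 a; have rb0 := r0 b.
  have dd0 : 0 <= dd a b by exact: dist_ge0.
  have ga : 0 <= g * r a by apply: mulr_ge0 => //; lra.
  have gb : 0 <= g * r b by apply: mulr_ge0 => //; lra.
  have : (g * r a) ^+ 2 <= dd a b ^+ 2 by rewrite ler_pXn2r ?nnegrE //; last lra.
  have : (g * r b) ^+ 2 <= dd a b ^+ 2 by rewrite ler_pXn2r ?nnegrE //; last lra.
  rewrite !exprMn. lra.
have HG : \sum_(a in N) \sum_(b in N) dd a b ^+ 2 <= 2 * k%:R * Q := G1 N x c.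
have I5 : g ^+ 2 * (2 * (k%:R - 1) * Q) <= 2 * (2 * k%:R * Q).
  have -> : 2 * (k%:R - 1) * Q = \sum_(a in N) ((k%:R - 1) * r a ^+ 2 + (Q - r a ^+ 2)).
    rewrite big_split /= sumrB sumr_const -mulr_sumr -/Q -mulr_natl; ring.
  rewrite mulr_sumr.
  apply: (le_trans (y := 2 * \sum_(a in N) \sum_(b in N) dd a b ^+ 2)); last by lra.
  rewrite mulr_sumr; apply: ler_sum => a Ha; rewrite H1 //; exact: H2.
have k6 : (k < 6)%N.
  rewrite -(ltr_nat R).
  have : g ^+ 2 * (k%:R - 1) <= 2 * k%:R.
    rewrite -(ler_pM2r Qpos). nra.
  have : 12 / 5 < g ^+ 2 by nra.
  have : 1 <= k%:R :> R by rewrite ler1n.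
  nra.
have [m Hm hmin] := exists_min r hN.
have rm0 := r0 m.
have I6 : k%:R * r m <= S.
  have : \sum_(a in N) r m <= S by apply: ler_sum => a Ha; exact: hmin.
  by rewrite sum_constR.
have I7 : \sum_(a in N :\ m) dd m a <= (k%:R - 1) * r m + (S - r m).
  have -> : S - r m = \sum_(a in N :\ m) r a by rewrite /S (big_setD1 m) //= addrC addrK.
  have -> : (k%:R - 1) * r m = \sum_(a in N :\ m) r m by rewrite sum_constR cardD.
  rewrite -big_split /=; apply: ler_sum => a _.
  by rewrite /dd /r (le_trans (dist_tri _ c _)) // dist_sym.
have F2m : g * S < \sum_(a in N :\ m) dd m a := hF2 m Hm.
have gS : 0 < (g - 1562 / 1000) * S by apply: mulr_gt0 => //; lra.
have [k4|k5] := leqP k 4.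
  have k4R : k%:R <= 4 :> R by rewrite ler_nat.
  exact: (arith_k4 hg' Spos rm0 I6 k4R (lt_le_trans F2m I7)).
have k5' : k = 5%N by apply/eqP; rewrite eqn_leq -ltnS k6 k5.
have kR : k%:R = 5 :> R by rewrite k5'.
rewrite kR in I6 I7 HG cardD.
have [caseA|caseB] := leP (3 * r m) ((g - 1) * S).
  exact: (arith_A caseA (lt_le_trans F2m I7)).
set T := \sum_(m' in N) \sum_(a in N :\ m') dd m' a.
have I1 : 5 * (g * S) <= T.
  have : \sum_(m' in N) (g * S) <= T by apply: ler_sum => m' Hm'; apply: ltW; exact: hF2.
  by rewrite sum_constR kR.
set c0 := g * S / 4.
have c00 : 0 <= c0 by rewrite /c0; apply: divr_ge0 => //; nra.
have I2 : 2 * c0 * T <= \sum_(m' in N) \sum_(a in N) dd m' a ^+ 2 + 20 * c0 ^+ 2.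
  have -> : 20 * c0 ^+ 2 = \sum_(m' in N) \sum_(a in N :\ m') c0 ^+ 2.
    rewrite (eq_bigr (fun _ => 4 * c0 ^+ 2)); last first.
      by move=> m' Hm'; rewrite sum_constR cardD //; ring.
    by rewrite sum_constR kR; ring.
  rewrite mulr_sumr -big_split /=; apply: ler_sum => m' Hm'.
  rewrite H1 // mulr_sumr -big_split /=; apply: ler_sum => a _.
  have := sqr_ge0 (dd m' a - c0); nra.
have hra : forall a, a \in N -> r a <= S - 4 * r m.
  move=> a Ha.
  have : \sum_(b in N :\ a) r m <= \sum_(b in N :\ a) r b.
    by apply: ler_sum => b; rewrite in_setD1 => /andP[_ hb]; exact: hmin.
  rewrite sum_constR cardD // => h; rewrite /S (big_setD1 a Ha) /=; lra.
have I4 : Q <= (S - 4 * r m) * S.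
  rewrite /Q {2}/S mulr_sumr; apply: ler_sum => a Ha.
  have := hra a Ha; have := r0 a; nra.
have HG' : \sum_(m' in N) \sum_(a in N) dd m' a ^+ 2 <= 2 * 5 * Q := HG.
exact: (arith_B hg' Spos rm0 caseB I1 erefl I2 HG' I4).
Qed.
End Geo.

Section Graph.
Variable V : finType.

Lemma set2C (x y : V) : [set x; y] = [set y; x].
Proof. by apply/setP => z; rewrite !inE orbC. Qed.

Lemma set2_eq (x y u v : V) : [set x; y] = [set u; v] ->
  (x = u /\ y = v) \/ (x = v /\ y = u).
Proof.
move=> h.
have hx : x \in [set u; v] by rewrite -h !inE eqxx.
have hy : y \in [set u; v] by rewrite -h !inE eqxx orbT.
have hu : u \in [set x; y] by rewrite h !inE eqxx.
have hv : v \in [set x; y] by rewrite h !inE eqxx orbT.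
move: hx hy hu hv; rewrite !inE.
by move=> /orP[]/eqP-> /orP[]/eqP-> /orP[]/eqP hu /orP[]/eqP hv; subst; auto.
Qed.

Lemma adj_sym (E : {set {set V}}) x y : adj E x y = adj E y x.
Proof. by rewrite /adj set2C. Qed.

Lemma connect_map (e e' : rel V) (phi : V -> V) :
  (forall x y, e x y -> connect e' (phi x) (phi y)) ->
  forall u v, connect e u v -> connect e' (phi u) (phi v).
Proof.
move=> H u v /connectP [pth Hp ->].
elim: pth u Hp => [|y pth IH] u /=; first by rewrite connect0.
move=> /andP[Huy Hp].
exact: connect_trans (H _ _ Huy) (IH _ Hp).
Qed.

Fixpoint reach (E : {set {set V}}) (r : V) (n : nat) (v : V) : bool :=
  if n is n'.+1 then (v == r) || [exists y, adj E v y && reach E r n' y]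
  else v == r.

Lemma reach_path E r p v : path (adj E) v p -> last v p = r -> reach E r (size p) v.
Proof.
elim: p v => [|y p IH] v /=; first by move=> _ ->; rewrite eqxx.
move=> /andP[hvy hp] hl; apply/orP; right; apply/existsP; exists y.
by rewrite hvy IH.
Qed.

Lemma conn_lb (Vt : {set V}) (E : {set {set V}}) :
  Vt != set0 ->
  (forall e, e \in E -> #|e| = 2 /\ e \subset Vt) ->
  (forall u v, u \in Vt -> v \in Vt -> connect (adj E) u v) ->
  (#|Vt| - 1 <= #|E|)%N.
Proof.
case/set0Pn => r Hr hE hC.
have hex : forall v, exists n, reach E r n v || (v \notin Vt).
  move=> v; case: (boolP (v \in Vt)) => hv; last by exists 0%N; rewrite orbT.
  have /connectP [pth Hp Hl] := hC v r hv Hr.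
  by exists (size pth); rewrite (reach_path Hp) // -Hl.
pose dist v := ex_minn (hex v).
have hpar : forall v, v \in Vt -> v != r ->
    exists y, adj E v y && (dist y < dist v)%N.
  move=> v hv hvr.
  rewrite /dist; case: (ex_minnP (hex v)) => n.
  rewrite hv orbF.
  case: n => [|n] /=; first by rewrite (negbTE hvr).
  rewrite (negbTE hvr) /= => /existsP [y /andP[hvy hy]] _.
  exists y; rewrite hvy /=.
  case: (ex_minnP (hex y)) => n' _ hmin.
  by apply: leq_ltn_trans (hmin n _) _; rewrite ?hy.
pose par v := if [pick y | adj E v y && (dist y < dist v)%N] is Some y then y else v.
have hparP : forall v, v \in Vt -> v != r -> adj E v (par v) && (dist (par v) < dist v)%N.
  move=> v hv hvr; rewrite /par; case: pickP => [y //|h].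
  by have [y hy] := hpar v hv hvr; rewrite h in hy.
pose f v := [set v; par v].
have finj : {in Vt :\ r &, injective f}.
  move=> u v /setD1P [hur hu] /setD1P [hvr hv] /set2_eq [[//]|[h1 h2]].
  have /andP[_ d1] := hparP u hu hur.
  have /andP[_ d2] := hparP v hv hvr.
  by move: d1 d2; rewrite -h1 h2 => d1 d2; have := ltn_trans d1 d2; rewrite ltnn.
have hsub : f @: (Vt :\ r) \subset E.
  apply/subsetP => e /imsetP [v /setD1P [hvr hv] ->].
  by have /andP[h _] := hparP v hv hvr.
have := subset_leq_card hsub; rewrite card_in_imset // (cardsD1 r Vt) Hr.
by rewrite add1n subn1 /=.
Qed.

Lemma mk_tree (Vt : {set V}) (E : {set {set V}}) :
  Vt != set0 ->
  (forall e, e \in E -> #|e| = 2 /\ e \subset Vt) ->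
  (forall u v, u \in Vt -> v \in Vt -> connect (adj E) u v) ->
  (#|E| <= #|Vt| - 1)%N -> is_tree Vt E.
Proof.
move=> h1 h2 h3 h4; split => //.
by apply/eqP; rewrite eqn_leq h4 conn_lb.
Qed.
End Graph.

Section W.
Variables (R : realType) (d : nat) (V : finType) (p : V -> 'rV[R]_d).

Lemma bigmax_le (A : {set V}) (F : V -> R) c : 0 <= c ->
  (forall u, u \in A -> F u <= c) -> \big[Num.max/0]_(u in A) F u <= c.
Proof.
move=> c0 h; apply: (big_ind (fun x => x <= c)) => //.
by move=> x y hx hy; rewrite ge_max hx hy.
Qed.

Lemma le_bigmax (A : {set V}) (F : V -> R) a : a \in A ->
  F a <= \big[Num.max/0]_(u in A) F u.
Proof.
move=> ha; rewrite unlock.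
have : a \in index_enum V by rewrite mem_index_enum.
elim: (index_enum V) => [//|y s IH] /=.
rewrite inE => /orP[/eqP <-|hs].
  by rewrite ha le_max lexx.
case: ifP => _; last exact: IH.
by rewrite le_max IH // orbT.
Qed.

Lemma w_ge0 e : 0 <= eucl_weight p e.
Proof.
apply: (big_ind (fun x => 0 <= x)) => //; first by move=> x y hx hy; rewrite le_max hx.
move=> u _; apply: (big_ind (fun x => 0 <= x)) => //; first by move=> x y hx hy; rewrite le_max hx.
by move=> v _; exact: dist_ge0.
Qed.

Lemma w_pair a b : eucl_weight p [set a; b] = eucl_dist (p a) (p b).
Proof.
apply/eqP; rewrite eq_le; apply/andP; split.
  apply: bigmax_le; first exact: dist_ge0.
  move=> u hu; apply: bigmax_le; first exact: dist_ge0.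
  move=> v hv; case/set2P: hu => ->; case/set2P: hv => ->;
    rewrite ?dist_xx ?dist_ge0 //.
  by rewrite dist_sym.
have hb : b \in [set a; b] by rewrite !inE eqxx orbT.
have ha : a \in [set a; b] by rewrite !inE eqxx.
apply: le_trans (@le_bigmax _ (fun v => eucl_dist (p a) (p v)) _ hb) _.
exact: (@le_bigmax _ (fun u => \big[Num.max/0]_(v in [set a; b]) eucl_dist (p u) (p v)) _ ha).
Qed.

Lemma sum_sub (X : finType) (A B : {set X}) (F : X -> R) :
  A \subset B -> (forall x, 0 <= F x) -> \sum_(x in A) F x <= \sum_(x in B) F x.
Proof.
move=> hAB hF; rewrite [X in _ <= X](big_setID (A := B) A) /=.
move/setIidPr: hAB; rewrite setIC => ->.
rewrite lerDl; apply: sumr_ge0 => x _; exact: hF.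
Qed.

Lemma sum_one (X : finType) (A : {set X}) (F : X -> R) x :
  x \in A -> (forall x, 0 <= F x) -> F x <= \sum_(y in A) F y.
Proof.
move=> hx hF; have h := @sum_sub X [set x] A F.
rewrite big_set1 in h; apply: h => //; by rewrite sub1set.
Qed.

Lemma fin_min (X : finType) (P : X -> Prop) (f : X -> R) x0 :
  P x0 -> exists x, P x /\ forall y, P y -> f x <= f y.
Proof.
move=> h0.
suff : exists x, P x /\ forall y, y \in enum X -> P y -> f x <= f y.
  by case=> x [hx hy]; exists x; split => // y; apply: hy; rewrite mem_enum.
elim: (enum X) => [|z s [x [hx hs]]]; first by exists x0.
case: (classic (P z)) => hz.
  case: (leP (f x) (f z)) => hxz.
    exists x; split => // y; rewrite inE => /orP[/eqP ->|]; [by []|exact: hs].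
  exists z; split => // y; rewrite inE => /orP[/eqP ->|hy hPy]; first by [].
  by apply: le_trans (ltW hxz) (hs y hy hPy).
exists x; split => // y; rewrite inE => /orP[/eqP ->|]; [by []|exact: hs].
Qed.
End W.

Lemma dist_eq0 (R : realType) (d : nat) (x y : 'rV[R]_d) : eucl_dist x y = 0 -> x = y.
Proof.
move=> h.
have hs : \sum_i (x ord0 i - y ord0 i) ^+ 2 = 0 by rewrite -dist_sq h expr0n.
apply/rowP => i.
have : (x ord0 i - y ord0 i) ^+ 2 == 0.
  move/eqP: hs; rewrite psumr_eq0; last by move=> j _; exact: sqr_ge0.
  by move/allP => /(_ i (mem_index_enum _)) /implyP /(_ isT).
by rewrite sqrf_eq0 subr_eq0 => /eqP.
Qed.

Unset Implicit Arguments.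

Lemma nat_arith (e2 eo nw e n nm vt vt2 : nat) : (e2 <= eo + nw)%N -> eo = (e - n)%N ->
  (nw <= nm)%N -> n = nm.+1 -> vt = vt2.+1 -> (n <= e)%N -> (0 < vt2)%N -> e = (vt - 1)%N ->
  (e2 <= vt2 - 1)%N.
Proof. lia. Qed.

Theorem mainTheorem1 (R : realType) (d : nat) (V : finType)
    (p : V -> 'rV[R]_d) (T : {set V}) (gamma : R) :
  injective p ->
  T != set0 ->
  1562%:R / 1000%:R < gamma ->
  gamma_stable p T gamma ->
  forall (Vt : {set V}) (E : {set {set V}}),
    is_min_steiner_tree (eucl_weight p) T Vt E -> Vt \subset T.
Proof.
move=> hinj hT hg [VO [EO [hOmin huniq]]] Vt E hmin.
have hg' : 1562 / 1000 < gamma by [].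
have g1 : 1 < gamma by lra.
set w := eucl_weight p.
have w0 : forall e, 0 <= w e := w_ge0 p.
have [hVt hE] : Vt = VO /\ E = EO.
  apply: (huniq w) => //.
  by move=> e _; rewrite lexx /= -/w; have := w0 e; nra.
subst VO EO.
apply/subsetP => s Hs; case: (boolP (s \in T)) => // HsT; exfalso.
pose w' := fun e => if e \in E then gamma * w e else w e.
have w'0 : forall e, 0 <= w' e.
  by move=> e; rewrite /w'; case: ifP => _; have := w0 e; nra.
have w'b : forall e : {set V}, #|e| = 2%N -> w e <= w' e <= gamma * w e.
  by move=> e _; rewrite /w'; case: ifP => _; have := w0 e; rewrite ?lexx /=; nra.
have Key : forall Vt' E', is_steiner_tree T Vt' E' -> (Vt' <> Vt \/ E' <> E) ->
    gamma * \sum_(e in E :\: E') w e < \sum_(e in E' :\: E) w e.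
  move=> Vt' E' hst hne.
  have [[Vm Em] [hm hmm]] := fin_min (P := fun x : {set V} * {set {set V}} => is_steiner_tree T x.1 x.2)
       (fun x => tree_weight w' x.2) (x0 := (Vt, E)) hmin.1.
  have [hVm hEm] : Vm = Vt /\ Em = E.
    apply: (huniq w' w'0 w'b); split => // V'' E'' h; exact: (hmm (V'', E'') h).
  have hle : forall V'' E'', is_steiner_tree T V'' E'' -> tree_weight w' E <= tree_weight w' E''.
    by move=> V'' E'' h; rewrite -hEm; exact: (hmm (V'', E'') h).
  have hlt : tree_weight w' E < tree_weight w' E'.
    rewrite ltNge; apply/negP => hge.
    have [h1 h2] : Vt' = Vt /\ E' = E.
      apply: (huniq w' w'0 w'b); split => // V'' E'' h; exact: le_trans hge (hle _ _ h).
    by case: hne.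
  move: hlt; rewrite /tree_weight (big_setID (A := E') E) (big_setID (A := E) E') /= setIC.
  have -> : \sum_(i in E :\: E') w' i = gamma * \sum_(e in E :\: E') w e.
    rewrite mulr_sumr; apply: eq_bigr => e; rewrite inE => /andP[_ he].
    by rewrite /w' he.
  have -> : \sum_(i in E' :\: E) w' i = \sum_(e in E' :\: E) w e.
    apply: eq_bigr => e; rewrite inE => /andP[he _].
    by rewrite /w' (negbTE he).
  lra.
case: hmin => [[[hne hedge hconn hcard] hTV] hminw].
pose N := [set a | [set s; a] \in E].
have hNs : forall a, a \in N -> a != s.
  move=> a; rewrite inE => ha; apply/eqP => has; subst a.
  by have := (hedge _ ha).1; rewrite cards2 eqxx.
have hNE : forall a, a \in N -> [set s; a] \in E by move=> a; rewrite inE.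
have hNV : forall a, a \in N -> a \in Vt.
  move=> a ha; have := (hedge _ (hNE a ha)).2 => /subsetP; apply.
  by rewrite !inE eqxx orbT.
have [t Ht] := set0Pn _ hT.
have htV : t \in Vt by move/subsetP: hTV; apply.
have hts : t != s by apply/eqP => hts; subst t; rewrite Ht in HsT.
have hNne : N != set0.
  have /connectP [pth hp hl] := hconn s t Hs htV.
  case: pth hp hl => [_ /= hl|y pth /= /andP[hsy _] _]; first by rewrite hl eqxx in hts.
  by apply/set0Pn; exists y; rewrite inE.
have hr : forall a, a \in N -> 0 < eucl_dist (p s) (p a).
  move=> a ha; rewrite lt_def dist_ge0 andbT; apply/eqP => /dist_eq0 /hinj h.
  by have := hNs a ha; rewrite h eqxx.
have hwd : forall a b, w [set a; b] = eucl_dist (p a) (p b) by move=> a b; exact: w_pair.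
have F1 : forall a b, a \in N -> b \in N -> a != b ->
    gamma * eucl_dist (p s) (p b) < eucl_dist (p a) (p b).
  move=> a b ha hb hab.
  pose E1 := (E :\ [set s; b]) :|: [set [set a; b]].
  have hsb : [set s; b] \in E := hNE b hb.
  have hsbab : [set s; b] != [set a; b].
    apply/eqP => /set2_eq [[h _]|[h _]].
      by have := hNs a ha; rewrite -h eqxx.
    by have := hNs b hb; rewrite -h eqxx.
  have tree1 : is_tree Vt E1.
    apply: mk_tree => //.
    - move=> e; rewrite in_setU in_setD1 in_set1 => /orP[/andP[_ he]|/eqP ->]; first exact: hedge.
      split; first by rewrite cards2 hab.
      by apply/subsetP => z /set2P [->|->]; apply: hNV.
    - move=> u v hu hv; apply: (connect_map (phi := id)) (hconn u v hu hv) => x y hxy.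
      have hsa : adj E1 s a.
        rewrite /adj in_setU in_setD1 hNE // andbT; apply/orP; left.
        apply/eqP => /set2_eq [[_ h]|[h _]]; first by rewrite h eqxx in hab.
        by have := hNs b hb; rewrite -h eqxx.
      have hab1 : adj E1 a b by rewrite /adj in_setU in_set1 eqxx orbT.
      case: (eqVneq [set x; y] [set s; b]) => hxyE.
        case/set2_eq: hxyE => [[-> ->]|[-> ->]] /=.
          exact: connect_trans (connect1 hsa) (connect1 hab1).
        by apply: connect_trans (connect1 _) (connect1 _); rewrite adj_sym; [exact: hab1|exact: hsa].
      by apply: connect1; move: hxy; rewrite /adj in_setU in_setD1 hxyE => ->.
    - rewrite -hcard (cardsD1 [set s; b] E) hsb add1n cardsU cards1.
      by apply: leq_trans (leq_subr _ _) _; rewrite addn1.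
  have hne1 : Vt <> Vt \/ E1 <> E.
    right => h; have : [set s; b] \in E1 by rewrite h.
    by rewrite in_setU in_setD1 in_set1 eqxx (negbTE hsbab).
  have K := Key _ _ (conj tree1 hTV) hne1.
  have l1 : w [set s; b] <= \sum_(e in E :\: E1) w e.
    apply: sum_one => //; rewrite inE hsb andbT in_setU in_setD1 in_set1 eqxx.
    by rewrite (negbTE hsbab).
  have l2 : \sum_(e in E1 :\: E) w e <= w [set a; b].
    have h := sum_sub (A := E1 :\: E) (B := [set [set a; b]]) (F := w).
    rewrite big_set1 in h; apply: h => //; apply/subsetP => e; rewrite !inE => /andP[he].
    by case/orP => [/andP[_ h]|//]; rewrite h in he.
  rewrite !hwd in l1 l2.
  have : gamma * eucl_dist (p s) (p b) <= gamma * \sum_(e in E :\: E1) w e.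
    by apply: ler_wpM2l => //; lra.
  lra.
have F2 : forall m, m \in N -> gamma * \sum_(a in N) eucl_dist (p s) (p a) <
                      \sum_(a in N :\ m) eucl_dist (p m) (p a).
  move=> m hm.
  pose star := [set [set s; a] | a in N].
  pose new := [set [set m; a] | a in N :\ m].
  pose E2 := (E :\: star) :|: new.
  pose Vt2 := Vt :\ s.
  have hms : m != s := hNs m hm.
  have hstarE : star \subset E by apply/subsetP => e /imsetP [a ha ->]; exact: hNE.
  have hold : forall e, e \in E :\: star -> s \notin e.
    move=> e; rewrite inE => /andP[hes heE]; apply/negP => hse.
    have /cards2P [x [y [hxy he]]] : #|e| == 2%N by rewrite (hedge e heE).1.
    move: hse; rewrite he !inE => /orP[/eqP hx|/eqP hy].
      rewrite -hx in he; move: hes; rewrite he => /negP; apply.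
      by apply: imset_f; rewrite inE -he.
    rewrite -hy in he; move: hes; rewrite he set2C => /negP; apply.
    by apply: imset_f; rewrite inE set2C -he.
  have hnew : forall e, e \in new -> s \notin e.
    move=> e /imsetP [a ha ->]; rewrite !inE negb_or eq_sym hms /=.
    move: ha; rewrite in_setD1 => /andP[_ ha]; by rewrite eq_sym hNs.
  have hE2 : forall e, e \in E2 -> s \notin e.
    by move=> e; rewrite in_setU => /orP[/hold|/hnew].
  have hmE : forall y, y \in N -> connect (adj E2) m y.
    move=> y hy; case: (eqVneq y m) => [->|hym]; first exact: connect0.
    apply: connect1; rewrite /adj in_setU; apply/orP; right.
    by apply: imset_f; rewrite in_setD1 hym.
  have tree2 : is_tree Vt2 E2.
    apply: mk_tree.
    - by apply/set0Pn; exists t; rewrite in_setD1 hts.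
    - move=> e he; have hs := hE2 e he.
      move: he; rewrite in_setU => /orP[he|/imsetP [a ha ->]].
        have heE : e \in E by move: he; rewrite inE => /andP[].
        split; first exact: (hedge e heE).1.
        apply/subsetP => z hz; rewrite in_setD1.
        have -> : z != s by apply/eqP => hzs; subst z; rewrite hz in hs.
        by move/subsetP: (hedge e heE).2; apply.
      move: ha; rewrite in_setD1 => /andP[ham ha].
      split; first by rewrite cards2 eq_sym ham.
      apply/subsetP => z /set2P [->|->]; rewrite in_setD1 ?hms ?hNs ?hNV //.
    - move=> u v; rewrite !in_setD1 => /andP[hus hu] /andP[hvs hv].
      pose phi := fun x => if x == s then m else x.
      have H : forall x y, adj E x y -> connect (adj E2) (phi x) (phi y).
        move=> x y hxy; rewrite /phi.
        case: (eqVneq x s) => [hx|hx]; case: (eqVneq y s) => [hy|hy].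
        - by subst x y; move: (hedge _ hxy).1; rewrite cards2 eqxx.
        - by subst x; apply: hmE; rewrite inE.
        - subst y; rewrite (sym_connect_sym (fun a b => adj_sym E2 a b)).
          by apply: hmE; rewrite inE set2C.
        - apply: connect1; rewrite /adj in_setU; apply/orP; left.
          rewrite inE; move: hxy; rewrite /adj => ->; rewrite andbT; apply/imsetP => [[a ha hxya]].
          have : s \in [set x; y] by rewrite hxya !inE eqxx.
          by rewrite !inE eq_sym (negbTE hx) eq_sym (negbTE hy).
      have := connect_map H (hconn u v hu hv).
      by rewrite /phi (negbTE hus) (negbTE hvs).
    - have c1 : (#|E2| <= #|E :\: star| + #|new|)%N by rewrite cardsU leq_subr.
      have c2 := cardsD E star; rewrite (setIidPr hstarE) in c2.
      have c3 : #|star| = #|N|.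
        apply: card_in_imset => a b ha hb /set2_eq [[_ ->]|[h1 h2]] //.
        by have := hNs a ha; rewrite h2 eqxx.
      have c4 : (#|new| <= #|N :\ m|)%N by apply: leq_imset_card.
      have c5 := cardsD1 m N; rewrite hm add1n in c5.
      have c6 := cardsD1 s Vt; rewrite Hs add1n in c6.
      have c7 := subset_leq_card hstarE.
      have c9 : (0 < #|Vt :\ s|)%N by apply/card_gt0P; exists t; rewrite in_setD1 hts.
      rewrite c3 in c2 c7.
      rewrite /Vt2; move: c1 c2 c4 c5 c6 c7 c9 hcard; apply: nat_arith.
  have hT2 : T \subset Vt2.
    apply/subsetP => z hz; rewrite in_setD1; move/subsetP: hTV => /(_ z hz) ->.
    by rewrite andbT; apply/eqP => hzs; subst z; rewrite hz in HsT.
  have hne2 : Vt2 <> Vt \/ E2 <> E.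
    left => h; have : s \in Vt2 by rewrite h.
    by rewrite /Vt2 in_setD1 eqxx.
  have K := Key _ _ (conj tree2 hT2) hne2.
  have l1 : \sum_(a in N) eucl_dist (p s) (p a) <= \sum_(e in E :\: E2) w e.
    have -> : \sum_(a in N) eucl_dist (p s) (p a) = \sum_(e in star) w e.
      rewrite big_imset /=; first by apply: eq_bigr => a _; rewrite hwd.
      move=> a b ha hb /set2_eq [[_ ->]|[h1 h2]] //.
      by have := hNs a ha; rewrite h2 eqxx.
    apply: sum_sub => //; apply/subsetP => e he; rewrite inE (subsetP hstarE e he) andbT.
    apply/negP => /hE2; case/imsetP: he => a _ ->; by rewrite !inE eqxx.
  have l2 : \sum_(e in E2 :\: E) w e <= \sum_(a in N :\ m) eucl_dist (p m) (p a).
    have -> : \sum_(a in N :\ m) eucl_dist (p m) (p a) = \sum_(e in new) w e.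
      rewrite big_imset /=; first by apply: eq_bigr => a _; rewrite hwd.
      move=> a b ha hb /set2_eq [[_ ->]|[h1 h2]] //.
      by move: ha; rewrite in_setD1 h2 eqxx.
    apply: sum_sub => //; apply/subsetP => e; rewrite !inE => /andP[heE].
    by case/orP => [/andP[_ h]|//]; rewrite h in heE.
  have : gamma * \sum_(a in N) eucl_dist (p s) (p a) <= gamma * \sum_(e in E :\: E2) w e.
    by apply: ler_wpM2l => //; lra.
  lra.
exact: (geo_contra (x := p) (c := p s) hg hNne hr F1 F2).
Qed.
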